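(* Let $(E,\mathcal{E},m)$ be a $\sigma$-finite measure space and let $\{P(t)\}_{t\ge0}$ be a stochastic semigroup on $L^1(E,\mathcal{E},m)$ that is asymptotically stable with invariant density $f_*$. If a nonnegative measurable function $\tilde f_*$ is subinvariant for $\{P(t)\}_{t\ge0}$ and $m(\operatorname{supp} f_*\cap\{x:\tilde f_*(x)<\infty\})>0$, then $\tilde f_*\in L^1$.
   Context: $D(m)$ denotes the set of densities (nonnegative elements of $L^1$ of norm one). A stochastic semigroup is a $C_0$-semigroup of linear operators on $L^1$ each mapping $D(m)$ into $D(m)$. Each such operator (a positive contraction) is extended to nonnegative measurable functions by $Qf=\sup_n Qf_n$ whenever $f=\sup_n f_n$ with $0\le f_n\uparrow$, $f_n\in L^1_+$ (possibly $+\infty$). A nonnegative measurable $f$ is subinvariant (invariant) for the semigroup if $P(t)f\le f$ ($P(t)f=f$) for every $t\ge0$. The semigroup is asymptotically stable if it has an invariant density $f_*$ with $\lim_{t\to\infty}\|P(t)f-f_*\|=0$ for all $f\in D(m)$. $\operatorname{supp} f=\{x:f(x)\neq0\}$. *)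

(* Defs.v *)
From HB Require Import structures.
From mathcomp Require Import all_boot all_order all_algebra.
From mathcomp Require Import all_classical all_reals all_analysis.
From mathcomp Require Import measurable_realfun.
Set Implicit Arguments. Unset Strict Implicit. Unset Printing Implicit Defensive.
Import Order.TTheory GRing.Theory Num.Theory.
Import numFieldNormedType.Exports.
Local Open Scope classical_set_scope.
Local Open Scope ring_scope.

Section Defs.
Context (d : measure_display) (T : measurableType d) (R : realType)
  (mu : {measure set T -> \bar R}).

Definition L1 (f : T -> R) : Prop :=
  measurable_fun setT f /\ mu.-integrable setT (fun x => (f x)%:E).

Definition L1dist (f g : T -> R) : \bar R :=
  (\int[mu]_x (`| f x - g x |)%:E)%E.

Definition density (f : T -> R) : Prop :=
  L1 f /\ {ae mu, forall x, 0 <= f x} /\ (\int[mu]_x (f x)%:E = 1)%E.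

(* Stochastic semigroup {P(t)}_{t>=0} on L^1 (only t >= 0 is used);
   operators act on representatives and must respect a.e. equality. *)
Definition stochastic_semigroup (P : R -> (T -> R) -> (T -> R)) : Prop :=
  (forall t f g, 0 <= t -> L1 f -> L1 g -> {ae mu, forall x, f x = g x} ->
     {ae mu, forall x, P t f x = P t g x}) /\
  (forall t f, 0 <= t -> L1 f -> L1 (P t f)) /\
  (forall t (a b : R) f g, 0 <= t -> L1 f -> L1 g ->
     {ae mu, forall x, P t (fun y => a * f y + b * g y) x
                       = a * P t f x + b * P t g x}) /\
  (forall f, L1 f -> {ae mu, forall x, P 0 f x = f x}) /\
  (forall t s f, 0 <= t -> 0 <= s -> L1 f ->
     {ae mu, forall x, P (t + s) f x = P t (P s f) x}) /\
  (forall f, L1 f -> (L1dist (P t f) f @[t --> 0^'+] --> 0%E)) /\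
  (forall t f, 0 <= t -> density f -> density (P t f)).

Definition asymptotically_stable_with (P : R -> (T -> R) -> (T -> R))
    (fstar : T -> R) : Prop :=
  density fstar /\
  (forall t, 0 <= t -> {ae mu, forall x, P t fstar x = fstar x}) /\
  (forall f, density f -> (L1dist (P t f) fstar @[t --> +oo] --> 0%E)).

(* Q g <= h a.e. for the extension of Q to a nonnegative measurable g:
   Q g = sup_n Q g_n for any 0 <= g_n increasing to g, g_n in L^1_+. *)
Definition ext_le (Q : (T -> R) -> (T -> R)) (g h : T -> \bar R) : Prop :=
  forall gs : nat -> T -> R,
    (forall n, L1 (gs n)) -> (forall n x, 0 <= gs n x) ->
    (forall n x, gs n x <= gs n.+1 x) ->
    (forall x, g x = ereal_sup (range (fun n => (gs n x)%:E))) ->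
    {ae mu, forall x, (ereal_sup (range (fun n => (Q (gs n) x)%:E)) <= h x)%E}.

Definition subinvariant (P : R -> (T -> R) -> (T -> R)) (g : T -> \bar R)
    : Prop :=
  measurable_fun setT g /\ (forall x, (0 <= g x)%E) /\
  (forall t, 0 <= t -> ext_le (P t) g g).

End Defs.

(* Main.v *)
Require Import Defs.
From HB Require Import structures.
From mathcomp Require Import all_boot all_order all_algebra.
From mathcomp Require Import all_classical all_reals all_analysis.
From mathcomp Require Import measurable_realfun.
Import Order.TTheory GRing.Theory Num.Theory.
Local Open Scope classical_set_scope.
Local Open Scope ring_scope.

From mathcomp Require Import lra.

Section trunc.
Context {R : realType}.
Definition tr (e : \bar R) (n : nat) : R := fine (mine e n%:R%:E).

Lemma tr_ge0 e n : (0 <= e)%E -> 0 <= tr e n.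
Proof.
rewrite /tr; case: e => [r||] //= r0; rewrite ?lee_fin in r0.
  by rewrite -EFin_min /= le_min r0 ler0n.
Qed.

Lemma tr_le e n : (0 <= e)%E -> ((tr e n)%:E <= e)%E.
Proof.
rewrite /tr; case: e => [r||] //= r0; rewrite ?lee_fin in r0.
  by rewrite -EFin_min /= lee_fin ge_min lexx.
by rewrite leey.
Qed.

Lemma tr_len e n : (0 <= e)%E -> tr e n <= n%:R.
Proof.
rewrite /tr; case: e => [r||] //= r0; rewrite ?lee_fin in r0.
by rewrite -EFin_min /= ge_min lexx orbT.
Qed.

Lemma tr_mono e m n : (0 <= e)%E -> (m <= n)%N -> tr e m <= tr e n.
Proof.
rewrite /tr; case: e => [r||] //= r0 mn; rewrite ?lee_fin in r0.
  by rewrite -!EFin_min /= le_min !ge_min lexx /= ler_nat mn !orbT.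
by rewrite ler_nat.
Qed.

Lemma tr_eqr r n : r <= n%:R -> tr r%:E n = r.
Proof. by move=> rn; rewrite /tr -EFin_min /= min_l. Qed.

Lemma tr_eqy n : tr +oo%E n = n%:R.
Proof. by []. Qed.
End trunc.
Lemma my_approx d (T : measurableType d) (R : realType) (mu : {measure set T -> \bar R})
  (F : (set T)^nat) (ft : T -> \bar R) :
  setT = \bigcup_i F i -> nondecreasing_seq F ->
  (forall i, measurable (F i) /\ (mu (F i) < +oo)%E) ->
  measurable_fun setT ft -> (forall x, (0 <= ft x)%E) ->
  let g := fun n x => \1_(F n) x * tr (ft x) n in
  [/\ forall n, L1 mu (g n), forall n x, 0 <= g n x, forall m n x, (m <= n)%N -> g m x <= g n x
   & forall x, ft x = ereal_sup (range (fun n => (g n x)%:E))].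
Proof.
move=> FU nd Fm mft ft0 g.
have sub m n : (m <= n)%N -> F m `<=` F n by move=> mn; rewrite -subsetEset; exact: nd.
have ind0 n x : 0 <= \1_(F n) x :> R by rewrite indicE ler0n.
have ind1 n x : \1_(F n) x <= 1 :> R by rewrite indicE; case: (_ \in _).
have g0 n x : 0 <= g n x by rewrite /g mulr_ge0 // tr_ge0.
have indm m n x : (m <= n)%N -> \1_(F m) x <= \1_(F n) x :> R.
  move=> mn; rewrite !indicE; case: (boolP (x \in F m)) => xF //.
  by rewrite (mem_set (sub _ _ mn _ (set_mem xF))).
have gle n x : ((g n x)%:E <= ft x)%E.
  apply: (@le_trans _ _ (tr (ft x) n)%:E); last exact: tr_le.
  rewrite lee_fin /g.
  by apply: ler_piMl; [exact: tr_ge0|].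
split => //.
- move=> n; have mg : measurable_fun setT (g n).
    apply: measurable_funM; first exact: measurable_indic (proj1 (Fm n)).
    apply: measurableT_comp; first exact: fine_measurable.
    by apply: measurable_mine => //; exact: measurable_cst.
  split => //; apply/integrableP; split; first exact/measurable_EFinP.
  apply: (@le_lt_trans _ _ (\int[mu]_x ((n%:R)%:E * (\1_(F n) x)%:E))%E).
    apply: ge0_le_integral => //.
    + apply: measurableT_comp => //; exact/measurable_EFinP.
    + apply: measurable_funeM; exact/measurable_EFinP/measurable_indic/(proj1 (Fm n)).
    + move=> x _; rewrite /= ger0_norm // -EFinM lee_fin mulrC.
      by apply: ler_wpM2l => //; exact: tr_len.
  rewrite ge0_integralZl_EFin //.
  + rewrite integral_indic // ?setIT; last exact: (proj1 (Fm n)).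
    by rewrite lte_mul_pinfty ?lee_fin ?(proj2 (Fm n)).
  + exact/measurable_EFinP/measurable_indic/(proj1 (Fm n)).
- move=> m n x mn; rewrite /g; apply: ler_pM => //; first exact: tr_ge0.
    exact: indm.
  by apply: tr_mono.
- move=> x; have : (\bigcup_i F i) x by rewrite -FU.
  move=> [n0 _ Fx].
  have gN N : (n0 <= N)%N -> g N x = tr (ft x) N.
    by move=> nN; rewrite /g indicE (mem_set (sub _ _ nN _ Fx)) mul1r.
  apply/eqP; rewrite eq_le; apply/andP; split; last first.
    by apply: ge_ereal_sup => _ [n _ <-].
  have := ft0 x; case Hx: (ft x) => [r||] // r0.
  + have rN : r <= (maxn n0 (Num.trunc r).+1)%:R.
      apply: le_trans (ltW (truncnS_gt r)) _; rewrite ler_nat; exact: leq_maxr.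
    apply: ereal_sup_ubound; exists (maxn n0 (Num.trunc r).+1) => //.
    by rewrite gN ?leq_maxl // Hx tr_eqr.
  + suff -> : ereal_sup (range (fun n => (g n x)%:E)) = +oo%E by [].
    case Hs: (ereal_sup _) => [s||] //.
    * have sN : s < (maxn n0 (Num.trunc s).+1)%:R.
        apply: lt_le_trans (truncnS_gt s) _; rewrite ler_nat; exact: leq_maxr.
      have : ((g (maxn n0 (Num.trunc s).+1) x)%:E <= s%:E)%E.
        by rewrite -Hs; apply: ereal_sup_ubound; eexists.
      by rewrite gN ?leq_maxl // Hx tr_eqy lee_fin leNgt sN.
    * have : ((g n0 x)%:E <= -oo)%E.
        by rewrite -Hs; apply: ereal_sup_ubound; eexists.
      by rewrite leeNy_eq.
Qed.
Lemma arith (R : realType) (m c f p : R) : 0 < m -> 1 <= m * f ->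
  m * (m + 1) <= c -> 0 <= f -> c * p <= m -> 1 <= c * `|p - f|.
Proof.
move=> m0 mf mc f0 cp.
have c0 : 0 <= c by apply: le_trans mc; rewrite mulr_ge0 // ?addr_ge0 // ltW.
have H1 : c * (f - p) <= c * `|p - f| by apply: ler_wpM2l => //; rewrite distrC ler_norm.
apply: le_trans H1.
have A : m * (m + 1) * f <= c * f by apply: ler_wpM2r.
have B : m + 1 <= (m + 1) * (m * f).
  by rewrite -{1}(mulr1 (m + 1)); apply: ler_wpM2l => //; rewrite addr_ge0 // ltW.
nra.
Qed.

Lemma my_key d (T : measurableType d) (R : realType) (mu : {measure set T -> \bar R})
  (P : R -> (T -> R) -> (T -> R)) (fstar : T -> R) (ft : T -> \bar R)
  (g : T -> R) (k : nat) :
  stochastic_semigroup mu P -> asymptotically_stable_with mu P fstar ->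
  L1 mu g -> (forall x, 0 <= g x) ->
  (forall t, 0 <= t -> {ae mu, forall x, ((P t g x)%:E <= ft x)%E}) ->
  ((k.+1 * k.+2)%:R%:E <= \int[mu]_x (g x)%:E)%E ->
  measurable ([set x | (((k.+1%:R)^-1)%:E <= (`|fstar x|)%:E)%E] `&`
              [set x | (ft x <= (k.+1%:R)%:E)%E]) ->
  mu ([set x | (((k.+1%:R)^-1)%:E <= (`|fstar x|)%:E)%E] `&`
      [set x | (ft x <= (k.+1%:R)%:E)%E]) = 0%E.
Proof.
move=> [Pwd [PL1 [Plin [_ [_ [_ Pdens]]]]]] [dstar [_ Pconv]] [mg ig] g0 Hle HK.
set Sk := _ `&` _ => mS.
have If := integrable_fin_num measurableT ig.
set c := fine (\int[mu]_x (g x)%:E).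
have cE : (\int[mu]_x (g x)%:E = c%:E)%E by rewrite fineK.
set m : R := k.+1%:R.
have m0 : 0 < m by rewrite ltr0n.
have Kc : m * (m + 1) <= c.
  by rewrite -lee_fin -cE (le_trans _ HK) // lee_fin /m natrM natr1.
have c0 : 0 < c by apply: lt_le_trans Kc; rewrite mulr_gt0 // ?addr_gt0.
pose h := fun y => g y / c.
have hE : (fun x => (h x)%:E) = (fun x => (c^-1)%:E * (g x)%:E)%E.
  by apply/funext => x; rewrite /h -EFinM mulrC.
have Lh : L1 mu h.
  split; first exact: (measurable_funM mg (measurable_cst c^-1)).
  by rewrite hE; apply: integrableZl.
have dh : density mu h.
  split => //; split.
    by apply: aeW => x; rewrite /h divr_ge0 // ltW.
  by rewrite hE integralZl // cE -EFinM mulVf // gt_eqF.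
have gE : (fun y => c * h y + 0 * h y) = g.
  by apply/funext => y; rewrite mul0r addr0 /h mulrC divfK // gt_eqF.
have bound t : 0 <= t -> (mu Sk <= c%:E * L1dist mu (P t h) fstar)%E.
  move=> t0.
  have [mPh _] := PL1 t h t0 Lh.
  have mdiff : measurable_fun setT (fun x => (`|P t h x - fstar x|)%:E).
    apply/measurable_EFinP; apply: measurableT_comp => //.
    exact: measurable_funB mPh (proj1 (proj1 dstar)).
  rewrite -(setIT Sk) -(integral_indic _ measurableT) // /L1dist -ge0_integralZl_EFin //; last exact: ltW.
  apply: ae_ge0_le_integral => //.
  - exact/measurable_EFinP/measurable_indic.
  - by move=> x _; rewrite -EFinM lee_fin mulr_ge0 // ltW.
  - by apply: measurable_funeM.
  have := Plin t c 0 h h t0 Lh Lh; rewrite gE => Hlin.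
  apply: (@filterS3 _ _ _ _ _ _ _ _ (Hle t t0) (proj1 (proj2 dstar)) Hlin).
  move=> x H1 H2 H3 _; rewrite indicE; case: (boolP (x \in Sk)) => xS.
    have [Hf Hft] := set_mem xS.
    rewrite -EFinM lee_fin; change (1 <= c * `|P t h x - fstar x|); apply: (@arith R m c (fstar x) (P t h x) m0 _ Kc H2).
      move: Hf; rewrite /= lee_fin ger0_norm // => Hf.
      by rewrite -(mulfV (lt0r_neq0 m0)); exact: (ler_wpM2l (ltW m0) Hf).
    rewrite -lee_fin; apply: le_trans (Hft : (ft x <= m%:E)%E); apply: le_trans H1.
    by rewrite H3 mul0r addr0.
  by rewrite -EFinM lee_fin mulr_ge0 // ltW.
have Hc : (c%:E * L1dist mu (P t h) fstar)%E @[t --> +oo] --> (c%:E * 0)%E.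
  by apply: cvgeZl => //; exact: Pconv.
rewrite mule0 in Hc.
apply/eqP; rewrite eq_le measure_ge0 andbT.
apply: (cvge_to_ge Hc).
near=> t; apply: bound; near: t; exact: nbhs_pinfty_ge.
Unshelve. all: end_near.
Qed.
Theorem corollary2p4 (d : measure_display) (T : measurableType d)
  (R : realType) (mu : {measure set T -> \bar R})
  (P : R -> (T -> R) -> (T -> R)) (fstar : T -> R) (ftilde : T -> \bar R) :
  sigma_finite setT mu ->
  stochastic_semigroup mu P ->
  asymptotically_stable_with mu P fstar ->
  subinvariant mu P ftilde ->
  (0 < mu ([set x | (fstar x != 0)%R] `&` [set x | ftilde x < +oo]))%E ->
  mu.-integrable setT ftilde.
Proof.
move=> /sigma_finiteP [F [FU nd Fm]] SG AS [mft [ft0 Psub]] Spos.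
have [dstar _] := AS.
have mfstar : measurable_fun setT fstar := proj1 (proj1 dstar).
pose g := fun n x => \1_(F n) x * tr (ftilde x) n.
have [gL1 g0 gnd gsup] : [/\ forall n, L1 mu (g n), forall n x, 0 <= g n x,
   forall m n x, (m <= n)%N -> g m x <= g n x
   & forall x, ftilde x = ereal_sup (range (fun n => (g n x)%:E))].
  have := @my_approx d T R mu F ftilde FU nd Fm mft ft0; exact.
have Hle n t : 0 <= t -> {ae mu, forall x, ((P t (g n) x)%:E <= ftilde x)%E}.
  move=> t0; have := Psub t t0 g gL1 g0 (fun n x => gnd n n.+1 x (leqnSn n)) gsup.
  apply: filterS => x Hx; apply: le_trans Hx.
  by apply: ereal_sup_ubound; exists n.
apply/integrableP; split => //.
have -> : (\int[mu]_x `|ftilde x| = \int[mu]_x ftilde x)%E.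
  by apply: eq_integral => x _; rewrite gee0_abs.
rewrite ltey; apply/negP => /eqP Hoo.
have mg' n : measurable_fun setT (fun x => (g n x)%:E).
  exact/measurable_EFinP/(proj1 (gL1 n)).
have big K : exists n, (K%:E <= \int[mu]_x (g n x)%:E)%E.
  have MC := @monotone_convergence _ _ _ mu setT measurableT
    (fun n x => (g n x)%:E) mg' (fun n x _ => g0 n x)
    (fun x _ m n mn => gnd m n x mn).
  have lE x : limn (fun n => (g n x)%:E) = ftilde x.
    rewrite gsup; apply: cvg_lim => //; apply: ereal_nondecreasing_cvgn.
    by move=> m n mn; rewrite lee_fin; exact: gnd.
  have ndI : {homo (fun n => (\int[mu]_x (g n x)%:E)%E) : m n / (m <= n)%N >-> (m <= n)%E}.
    move=> m n mn; apply: ge0_le_integral => //.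
    - by move=> x _; rewrite lee_fin.
    - by move=> x _; rewrite lee_fin; exact: gnd.
  have : (ereal_sup (range (fun n => \int[mu]_x (g n x)%:E)) = +oo)%E.
    rewrite -Hoo; under eq_integral do rewrite -lE.
    rewrite MC; apply/esym; apply: cvg_lim => //.
    exact: ereal_nondecreasing_cvgn.
  move=> Hs; have : (K%:E < ereal_sup (range (fun n => \int[mu]_x (g n x)%:E)))%E.
    by rewrite Hs ltry.
  by move=> /ereal_sup_gt [_ [n _ <-]] Hn; exists n; exact: ltW.
pose Sk (k : nat) := [set x | (((k.+1%:R)^-1)%:E <= (`|fstar x|)%:E)%E] `&`
              [set x | (ftilde x <= (k.+1%:R)%:E)%E].
have mabs : measurable_fun setT (fun x => (`|fstar x|)%:E).
  by apply/measurable_EFinP; apply: measurableT_comp.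
have mSk k : measurable (Sk k).
  apply: measurableI.
    rewrite -[X in measurable X]setTI; apply: measurable_lee => //.
  rewrite -[X in measurable X]setTI; apply: measurable_lee => //.
have Sk0 k : mu (Sk k) = 0%E.
  have [n Hn] := big (k.+1 * k.+2)%:R.
  exact: (@my_key d T R mu P fstar ftilde (g n) k SG AS (gL1 n) (g0 n) (Hle n) Hn (mSk k)).
set S := _ `&` _ in Spos.
have mS : measurable S.
  apply: measurableI.
    have -> : [set x | fstar x != 0] = [set x | ((0:R)%:E < (`|fstar x|)%:E)%E].
      by apply/seteqP; split => x /=; rewrite lte_fin normr_gt0.
    rewrite -[X in measurable X]setTI; apply: measurable_lte => //.
  rewrite -[X in measurable X]setTI; apply: measurable_lte => //.
have SU : S `<=` \bigcup_k Sk k.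
  move=> x [/= fx]; have := ft0 x; case Hx: (ftilde x) => [r||] // r0 _.
  move: r0; rewrite lee_fin => r0.
  have fpos : 0 < `|fstar x| by rewrite normr_gt0.
  pose k := maxn (Num.trunc r) (Num.trunc (`|fstar x|^-1)).
  exists k => //; split => /=.
    rewrite lee_fin invf_ple ?posrE ?ltr0n //.
    apply: ltW; apply: lt_le_trans (truncnS_gt _) _.
    by rewrite ler_nat ltnS leq_maxr.
  rewrite Hx lee_fin; apply: ltW; apply: lt_le_trans (truncnS_gt _) _.
  by rewrite ler_nat ltnS leq_maxl.
have : mu.-negligible (\bigcup_k Sk k).
  by apply: negligible_bigcup => k; exists (Sk k); split.
move=> [B [mB muB SB]].
have : (mu S <= mu B)%E.
  by apply: le_measure; rewrite ?inE //; exact: subset_trans SU SB.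
by rewrite muB leNgt Spos.
Qed.
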